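(* Let $G$ be a cubic graph of order $2n$ and let $m$ be a positive integer. If $m<\left\lceil \frac{3n}{4}\right\rceil$, then $\chi'_{[m]}(G)=\left\lceil \frac{3n}{m}\right\rceil$.
   Context: All graphs are finite, simple (no loops, no parallel edges), connected and cubic (3-regular). For a positive integer $m$, an $[m]$-matching of $G$ is a matching of $G$ with exactly $m$ edges. The excessive $[m]$-index $\chi'_{[m]}(G)$ is the minimum number of $[m]$-matchings of $G$ whose union is $E(G)$ (a covering of $E(G)$ by $[m]$-matchings); if some edge of $G$ lies in no $[m]$-matching, one sets $\chi'_{[m]}(G)=\infty$. *)

(* Defs.v *)
From mathcomp Require Import all_boot.
Set Implicit Arguments. Unset Strict Implicit. Unset Printing Implicit Defensive.

Definition simple_graph (T : finType) (e : rel T) : Prop :=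
  irreflexive e /\ symmetric e.

Definition cubic (T : finType) (e : rel T) : Prop :=
  forall x : T, #|[set y | e x y]| = 3.

Definition connected_graph (T : finType) (e : rel T) : Prop :=
  forall x y : T, connect e x y.

Definition edges (T : finType) (e : rel T) : {set {set T}} :=
  [set A : {set T} | [exists x, exists y, e x y && (A == [set x; y])]].

Definition matching (T : finType) (e : rel T) (M : {set {set T}}) : Prop :=
  M \subset edges e /\
  (forall A B, A \in M -> B \in M -> A != B -> [disjoint A & B]).

Definition m_matching (T : finType) (e : rel T) (m : nat) (M : {set {set T}}) : Prop :=
  matching e M /\ #|M| = m.

Definition m_cover (T : finType) (e : rel T) (m k : nat) : Prop :=
  exists F : 'I_k -> {set {set T}},
    (forall i, m_matching e m (F i)) /\ \bigcup_(i < k) F i = edges e.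

Definition excessive_index_eq (T : finType) (e : rel T) (m k : nat) : Prop :=
  m_cover e m k /\ (forall j, m_cover e m j -> k <= j).

Definition ceil_div (a b : nat) : nat := (a + b.-1) %/ b.

(* Main.v *)
Require Import Defs.
From mathcomp Require Import all_boot zify.
Set Implicit Arguments. Unset Strict Implicit. Unset Printing Implicit Defensive.


Section Gen.
Variables (T I : finType) (vs : I -> {set T}).

Definition indep (S : {set I}) :=
  forall i j, i \in S -> j \in S -> i != j -> [disjoint vs i & vs j].
Definition cov (S : {set I}) (w : T) : bool := [exists i in S, w \in vs i].

Lemma covP (S : {set I}) w : reflect (exists2 i, i \in S & w \in vs i) (cov S w).
Proof.
apply: (iffP existsP) => [[i /andP[]]|[i Hi Hw]]; first by exists i.
by exists i; rewrite Hi.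
Qed.

Lemma cov_sub (S1 S2 : {set I}) w : S1 \subset S2 -> cov S1 w -> cov S2 w.
Proof. by move=> /subsetP H /covP[i /H Hi Hw]; apply/covP; exists i. Qed.

Lemma covU (S1 S2 : {set I}) w : cov (S1 :|: S2) w = cov S1 w || cov S2 w.
Proof.
apply/covP/orP => [[i]|[]].
- by rewrite inE => /orP[] Hi Hw; [left|right]; apply/covP; exists i.
- by case/covP=> i Hi Hw; exists i; rewrite // inE Hi.
- by case/covP=> i Hi Hw; exists i; rewrite // inE Hi orbT.
Qed.

Lemma cov1U i (S : {set I}) w : cov (i |: S) w = (w \in vs i) || cov S w.
Proof.
rewrite covU; congr (_ || _); apply/covP/idP => [[j]|Hw]; last by exists i; rewrite ?inE.
by rewrite inE => /eqP ->.
Qed.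

Lemma indep_uniq (S : {set I}) i j w : indep S -> i \in S -> j \in S -> w \in vs i -> w \in vs j -> i = j.
Proof.
move=> HS Hi Hj Hwi Hwj; apply/eqP; apply/negPn/negP => Hne.
by move: (disjointFr (HS _ _ Hi Hj Hne) Hwi); rewrite Hwj.
Qed.

Lemma covD1 (S : {set I}) i w : indep S -> i \in S -> cov (S :\ i) w = cov S w && (w \notin vs i).
Proof.
move=> HS Hi; apply/covP/andP => [[j]|[/covP[j Hj Hw] Hni]].
- rewrite !inE => /andP[Hji Hj] Hw; split; first by apply/covP; exists j.
  apply/negP => Hwi; by rewrite (indep_uniq HS Hj Hi Hw Hwi) eqxx in Hji.
- exists j => //; rewrite !inE Hj andbT; apply/negP => /eqP Hji; subst j.
  by rewrite Hw in Hni.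
Qed.

Lemma indep_sub (S S' : {set I}) : S' \subset S -> indep S -> indep S'.
Proof. by move=> /subsetP H HS i j /H Hi /H Hj; apply: HS. Qed.

Lemma indep_add i (S : {set I}) : indep S ->
  (forall w, w \in vs i -> ~~ cov (S :\ i) w) -> indep (i |: S).
Proof.
move=> HS H j1 j2; rewrite !inE.
have key : forall j, j \in S -> j != i -> [disjoint vs i & vs j].
  move=> j Hj Hji; rewrite disjoint_subset; apply/subsetP => w Hw.
  rewrite inE; apply/negP => Hwj; apply: (negP (H w Hw)).
  by apply/covP; exists j; rewrite // !inE Hji.
case/orP=> [/eqP->|Hj1]; case/orP=> [/eqP->|Hj2] //; first by rewrite eqxx.
- by move=> Hne; apply: key; rewrite // eq_sym.
- by move=> Hne; rewrite disjoint_sym; apply: key.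
- exact: HS.
Qed.

Lemma two_pt (S : {set T}) x : #|S| = 2 -> x \in S -> exists y, x != y /\ S = [set x; y].
Proof.
move=> /eqP/cards2P[a [b [Hab ->]]]; rewrite !inE => /orP[]/eqP->.
- by exists b.
- by exists a; split; rewrite 1?eq_sym // setUC.
Qed.


Lemma disjP (U : finType) (A B : {set U}) :
  reflect (forall j, j \in A -> j \notin B) [disjoint A & B].
Proof.
rewrite disjoint_subset; apply: (iffP subsetP) => H j /H; by rewrite inE.
Qed.

Lemma swap_gen n : forall (A C : {set I}) x, #|A| < n ->
  (forall i, i \in A :|: C -> #|vs i| = 2) -> [disjoint A & C] -> indep A -> indep C ->
  cov C x -> ~~ cov A x ->
  exists A' C', [/\ A' :|: C' = A :|: C, [disjoint A' & C'], indep A' /\ indep C',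
   cov A' x && ~~ cov C' x & exists w0, forall w, w != x -> w != w0 ->
      cov A' w = cov A w /\ cov C' w = cov C w].
Proof.
elim: n => [|n IH] A C x // HA H2 Hd HiA HiC Hcx HxA.
case/covP: Hcx => i1 Hi1C Hx1.
have Hi1A : i1 \notin A by apply/negP => H; move/disjP: Hd => /(_ _ H); rewrite Hi1C.
have Hin1 : i1 \in A :|: C by rewrite inE Hi1C orbT.
have [x1 [Hxx1 Hv1]] := two_pt (H2 i1 Hin1) Hx1.
case: (boolP (cov A x1)) => [/covP[i2 Hi2A Hx12] | Hx1A]; last first.
  exists (i1 |: A), (C :\ i1); split; [| | split | apply/andP; split |].
  - apply/setP => j; rewrite !inE; case: eqP => [->|_] //=; by rewrite Hi1C orbT.
  - apply/disjP => j; rewrite !inE => /orP[/eqP->|HjA]; first by rewrite eqxx.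
    by move/disjP: Hd => /(_ _ HjA) /negbTE ->; rewrite andbF.
  - apply: indep_add => // w; rewrite Hv1 !inE => /orP[]/eqP->;
      apply/negP => /(cov_sub (subsetDl _ _)); apply/negP => //.
  - exact: indep_sub (subsetDl _ _) HiC.
  - by rewrite cov1U Hx1.
  - by rewrite covD1 // Hx1 andbF.
  - exists x1 => w Hwx Hwx1.
    have Hw : w \notin vs i1 by rewrite Hv1 !inE negb_or Hwx Hwx1.
    by rewrite cov1U covD1 // (negbTE Hw) andbT.
have Hi2 : i2 \in A :|: C by rewrite inE Hi2A.
have [x2 [Hx1x2 Hv2]] := two_pt (H2 i2 Hi2) Hx12.
have Hx2i2 : x2 \in vs i2 by rewrite Hv2 !inE eqxx orbT.
have Hi12 : i1 != i2 by apply/negP => /eqP E; subst i2; rewrite Hi2A in Hi1A.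
have Hxx2 : x != x2.
  apply/negP => /eqP E; subst x2; move/negP: HxA; apply; apply/covP; by exists i2.
have Hxi2 : x \notin vs i2 by rewrite Hv2 !inE negb_or Hxx2 andbT; apply/negP => /eqP E; subst x1; rewrite eqxx in Hxx1.
set A0 := A :\ i2; set C0 := C :\ i1.
have HK : forall w, w \in [set x; x1] -> ~~ cov A0 w && ~~ cov C0 w.
  move=> w; rewrite !inE => /orP[]/eqP->.
  - by rewrite /A0 /C0 covD1 // covD1 // Hx1 /= andbF (negbTE HxA).
  - by rewrite /A0 /C0 covD1 // covD1 // Hx12 Hv1 !inE eqxx orbT /= !andbF.
have H2' : forall i, i \in A0 :|: C0 -> #|vs i| = 2.
  by move=> i; rewrite !inE => /orP[]/andP[_ H]; apply: H2; rewrite inE H ?orbT.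
have Hd0 : [disjoint A0 & C0].
  apply/disjP => j; rewrite !inE => /andP[_ HjA]; by move/disjP: Hd => /(_ _ HjA) /negbTE ->; rewrite andbF.
have HiA0 : indep A0 by exact: indep_sub (subsetDl _ _) HiA.
have HiC0 : indep C0 by exact: indep_sub (subsetDl _ _) HiC.
have [A0' [C0' [w0 [Hu Hd' [HiA' HiC'] HcC' [Hw0 Hx2w0]]]]] : exists A0' C0' w0,
   [/\ A0' :|: C0' = A0 :|: C0, [disjoint A0' & C0'], indep A0' /\ indep C0',
     ~~ cov C0' x2 & (forall w, w != x2 -> w != w0 ->
      cov A0' w = cov A0 w /\ cov C0' w = cov C0 w) /\ (w0 != x2 -> cov A0' x2)].
  case: (boolP (cov C0 x2)) => Hx2C0; last first.
    by exists A0, C0, x2; split => //; split => [//|]; rewrite eqxx.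
  have HA0 : #|A0| < n.
    by move: HA; rewrite (cardsD1 i2 A) Hi2A add1n ltnS.
  have Hx2A0 : ~~ cov A0 x2 by rewrite covD1 // Hx2i2 andbF.
  have [A0' [C0' [Hu Hd' [HiA' HiC'] /andP[HcA' HcC'] [w0 Hw0]]]] :=
    IH A0 C0 x2 HA0 H2' Hd0 HiA0 HiC0 Hx2C0 Hx2A0.
  by exists A0', C0', w0; split => //; split.
have Hsub : forall w, cov A0' w || cov C0' w -> cov A0 w || cov C0 w.
  by move=> w; rewrite -!covU Hu.
have Hni : forall j, j \in A0' :|: C0' -> (j != i1) && (j != i2).
  move=> j; rewrite Hu !inE => /orP[]/andP[H1 H2j].
  - by rewrite H1 andbT; apply/negP => /eqP E; subst j; rewrite H2j in Hi1A.
  - rewrite H1 /=; apply/negP => /eqP E; subst j.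
    by move/disjP: Hd => /(_ _ Hi2A); rewrite H2j.
exists (i1 |: A0'), (i2 |: C0'); split; [| | split | apply/andP; split |].
- apply/setP => j; move/setP: Hu => /(_ j); rewrite !inE.
  case: (j =P i1) => [->|/eqP Hj1]; first by rewrite Hi1C orbT.
  case: (j =P i2) => [->|/eqP Hj2]; first by rewrite Hi2A orbT.
  by rewrite /= => ->.
- apply/disjP => j; rewrite !inE => Hj; apply/negP => Hj'.
  case/orP: Hj => [/eqP Ej|HjA]; case/orP: Hj' => [/eqP Ej'|HjC].
  + by subst; rewrite eqxx in Hi12.
  + by subst; move: (Hni i1); rewrite inE HjC orbT eqxx /= => /(_ isT).
  + by subst; move: (Hni i2); rewrite inE HjA eqxx andbF => /(_ isT).
  + by move/disjP: Hd' => /(_ _ HjA); rewrite HjC.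
- apply: indep_add => // w Hw; apply/negP => /(cov_sub (subsetDl _ _)) Hc.
  move: (HK w); rewrite -Hv1 => /(_ Hw) /andP[Ha Hc0].
  by move: (Hsub w); rewrite Hc /= (negbTE Ha) (negbTE Hc0) => /(_ isT).
- apply: indep_add => // w; rewrite Hv2 !inE => /orP[]/eqP->;
    apply/negP => /(cov_sub (subsetDl _ _)) Hc.
  + move: (HK x1); rewrite !inE eqxx orbT => /(_ isT) /andP[Ha Hc0].
    by move: (Hsub x1); rewrite Hc orbT (negbTE Ha) (negbTE Hc0) => /(_ isT).
  + by rewrite Hc in HcC'.
- by rewrite cov1U Hx1.
- rewrite cov1U (negbTE Hxi2) /=; apply/negP => Hc.
  move: (HK x); rewrite !inE eqxx => /(_ isT) /andP[Ha Hc0].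
  by move: (Hsub x); rewrite Hc orbT (negbTE Ha) (negbTE Hc0) => /(_ isT).
- exists w0 => w Hwx Hww0; rewrite !cov1U.
  case: (w =P x1) => [->|/eqP Hwx1].
    rewrite Hv1 !inE eqxx orbT Hx12 /=; split; apply/esym/covP.
    + by exists i2.
    + by exists i1; rewrite // Hv1 !inE eqxx orbT.
  have Hw1 : w \notin vs i1 by rewrite Hv1 !inE negb_or Hwx Hwx1.
  rewrite (negbTE Hw1) /=.
  case: (w =P x2) => [E|/eqP Hwx2].
    subst w; rewrite Hx2i2; split.
    + rewrite Hx2w0; last by rewrite eq_sym.
      by apply/esym/covP; exists i2.
    + apply/esym/covP; case: (boolP (cov C0 x2)) => [/covP[j]|Hn].
        by rewrite inE => /andP[_ Hj] Hx; exists j.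
      exfalso; move: (Hx2w0); rewrite eq_sym Hww0 => /(_ isT) Hc.
      by move: (Hsub x2); rewrite Hc /= (negbTE Hn) orbF covD1 // Hx2i2 andbF => /(_ isT).
  have Hw2 : w \notin vs i2 by rewrite Hv2 !inE negb_or Hwx1 Hwx2.
  rewrite (negbTE Hw2) /=; have [-> ->] := Hw0 w Hwx2 Hww0.
  by rewrite covD1 // covD1 // Hw1 Hw2 !andbT.
Qed.


Lemma indep_addd i (S : {set I}) : indep S ->
  (forall j, j \in S -> j != i -> [disjoint vs i & vs j]) -> indep (i |: S).
Proof.
move=> HS key j1 j2; rewrite !inE.
case/orP=> [/eqP->|Hj1]; case/orP=> [/eqP->|Hj2] //; first by rewrite eqxx.
- by move=> Hne; apply: key; rewrite // eq_sym.
- by move=> Hne; rewrite disjoint_sym; apply: key.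
- exact: HS.
Qed.

Lemma ndisjP (A B : {set T}) : ~~ [disjoint A & B] -> exists2 w, w \in A & w \in B.
Proof.
move=> H; apply/exists_inP; apply/negP => /exists_inP H'; move/negP: H; apply.
by apply/disjP => w Hw; apply/negP => Hw'; apply: H'; exists w.
Qed.

Lemma card_sep (U : finType) (D : {set U}) (P : pred U) :
  #|[set y in D | P y]| = \sum_(y in D) P y.
Proof. by rewrite -sum1_card big_mkcond /= [RHS]big_mkcond /=; apply: eq_bigr => y _; rewrite !inE; case: (y \in D); case: (P y). Qed.

Lemma deg2 (S : {set I}) y : indep S -> #|vs y| = 2 ->
  #|[set x in S | ~~ [disjoint vs x & vs y]]| <= 2.
Proof.
move=> HS /eqP/cards2P[u [v [Huv Hy]]].
set N := [set x in S | _].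
pose f x := if u \in vs x then u else v.
have Hf : forall x, x \in N -> (f x \in vs x) && (f x \in vs y).
  move=> x; rewrite inE => /andP[_ /ndisjP[w Hw1 Hw2]]; rewrite /f Hy.
  case: ifP => Hu; first by rewrite Hu !inE eqxx.
  move: Hw2; rewrite Hy !inE => /orP[]/eqP E; subst w; first by rewrite Hw1 in Hu.
  by rewrite Hw1 eqxx orbT.
rewrite -(@card_in_imset _ _ f N).
  apply: leq_trans (_ : #|[set u; v]| <= 2); last by rewrite cards2; case: (u != v).
  apply: subset_leq_card; apply/subsetP => w /imsetP[x Hx ->].
  by move: (Hf x Hx) => /andP[_]; rewrite Hy.
move=> x1 x2 H1 H2 E; move: (Hf x1 H1) (Hf x2 H2) => /andP[A1 _] /andP[A2 _].
move: H1 H2; rewrite !inE => /andP[H1 _] /andP[H2 _].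
by apply: (indep_uniq HS H1 H2 A1); rewrite E.
Qed.

Lemma balance_gen n : forall C D : {set I}, #|C| < n ->
  (forall i, i \in C :|: D -> #|vs i| = 2) -> [disjoint C & D] -> indep C -> indep D ->
  #|D| < #|C| ->
  exists C' D', [/\ C' :|: D' = C :|: D, [disjoint C' & D'], indep C', indep D' &
     #|C'|.+1 = #|C|].
Proof.
elim: n => [|n IH] C D // HC H2 Hd HiC HiD HDC.
have [x HxC Hdeg] : exists2 x, x \in C & #|[set y in D | ~~ [disjoint vs x & vs y]]| <= 1.
  apply/exists_inP; apply/negP => /exists_inP Hn.
  have Hall : forall x, x \in C -> 2 <= #|[set y in D | ~~ [disjoint vs x & vs y]]|.
    by move=> x Hx; rewrite ltnNge; apply/negP => H; apply: Hn; exists x.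
  have S1 : 2 * #|C| <= \sum_(x in C) #|[set y in D | ~~ [disjoint vs x & vs y]]|.
    by rewrite -sum1_card big_distrr /=; apply: leq_sum => x Hx; rewrite muln1 Hall.
  have S2 : \sum_(x in C) #|[set y in D | ~~ [disjoint vs x & vs y]]| <= 2 * #|D|.
    under eq_bigr => x _ do rewrite card_sep.
    rewrite exchange_big /= -sum1_card big_distrr /=; apply: leq_sum => y Hy.
    rewrite muln1 -card_sep.
    apply: deg2 => //; by apply: H2; rewrite inE Hy orbT.
  by move: (leq_trans S1 S2); rewrite leq_pmul2l // leqNgt HDC.
have HxCD : x \in C :|: D by rewrite inE HxC.
have HxD : x \notin D by move/disjP: Hd => /(_ _ HxC).
have HxCx : forall j, j \in C -> j != x -> [disjoint vs x & vs j].
  by move=> j Hj Hjx; apply: HiC; rewrite // eq_sym.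
move: Hdeg; rewrite leq_eqVlt ltnS leqn0 cards_eq0 => /orP[/cards1P[y Hy]|/eqP H0].
- have : y \in [set y] by rewrite inE.
  rewrite -Hy inE => /andP[HyD Hxy].
  have HxDj : forall j, j \in D -> j != y -> [disjoint vs x & vs j].
    move=> j Hj Hjy; apply/negPn/negP => Hc.
    have : j \in [set y] by rewrite -Hy inE Hj Hc.
    by rewrite inE (negbTE Hjy).
  have HyC : y \notin C by apply/negP => H; move/disjP: Hd => /(_ _ H); rewrite HyD.
  set C0 := C :\ x; set D0 := D :\ y.
  have HC0 : #|C0| < n by move: HC; rewrite (cardsD1 x C) HxC.
  have HSC : #|C0|.+1 = #|C| by rewrite (cardsD1 x C) HxC.
  have HSD : #|D0|.+1 = #|D| by rewrite (cardsD1 y D) HyD.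
  have H2' : forall i, i \in C0 :|: D0 -> #|vs i| = 2.
    by move=> i; rewrite !inE => /orP[]/andP[_ H]; apply: H2; rewrite inE H ?orbT.
  have Hd0 : [disjoint C0 & D0].
    apply/disjP => j; rewrite !inE => /andP[_ HjC].
    by move/disjP: Hd => /(_ _ HjC) /negbTE ->; rewrite andbF.
  have HDC0 : #|D0| < #|C0| by rewrite -ltnS HSD HSC.
  have [C0' [D0' [Hu Hd' HiC' HiD' HS']]] := IH C0 D0 HC0 H2' Hd0
    (indep_sub (subsetDl _ _) HiC) (indep_sub (subsetDl _ _) HiD) HDC0.
  have Hin : forall j, j \in C0' :|: D0' -> [/\ j != x, j != y & [disjoint vs x & vs j]].
    move=> j; rewrite Hu !inE => /orP[]/andP[Hj1 Hj2].
    + split => //; [by apply/negP => /eqP E; subst j; rewrite Hj2 in HyC | exact: HxCx].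
    + split => //; [by apply/negP => /eqP E; subst j; rewrite Hj2 in HxD | exact: HxDj].
  have HinC : forall j, j \in C0' -> [/\ j != x, j != y & [disjoint vs x & vs j]].
    by move=> j Hj; apply: Hin; rewrite inE Hj.
  have HinD : forall j, j \in D0' -> [/\ j != x, j != y & [disjoint vs x & vs j]].
    by move=> j Hj; apply: Hin; rewrite inE Hj orbT.
  have Hxny : x != y by apply/negP => /eqP E; subst y; rewrite HyD in HxD.
  have HU : forall P Q : {set I}, P :|: Q = C0' :|: D0' ->
      (x |: P) :|: (y |: Q) = C :|: D.
    move=> P Q HPQ; apply/setP => j; move/setP: HPQ => /(_ j); move/setP: Hu => /(_ j).
    rewrite !inE; case: (j =P x) => [->|/eqP Hjx]; first by rewrite HxC.
    case: (j =P y) => [->|/eqP Hjy]; first by rewrite ?eqxx HyD !orbT.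
    by rewrite /= => -> ->.
  have HU' : forall P Q : {set I}, P :|: Q = C0' :|: D0' ->
      (y |: P) :|: (x |: Q) = C :|: D.
    move=> P Q HPQ; rewrite -(HU P Q HPQ); apply/setP => j; rewrite !inE.
    by case: (j == x); case: (j == y); rewrite /= ?orbT //; case: (j \in P).
  case: (boolP [exists z in C0', ~~ [disjoint vs y & vs z]]) => [/exists_inP[z HzC Hyz]|Hno].
  + exists (x |: C0'), (y |: D0'); split.
    * exact: HU.
    * apply/disjP => j; rewrite !inE => /orP[/eqP->|Hj]; apply/negP => /orP[/eqP E|Hj'].
      - by rewrite E eqxx in Hxny.
      - by case: (HinD x Hj') => /eqP.
      - by case: (HinC j Hj) => _ /eqP.
      - by move/disjP: Hd' => /(_ _ Hj); rewrite Hj'.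
    * apply: indep_addd => // j Hj _; by case: (HinC j Hj).
    * apply: indep_addd => // j Hj Hjy; apply/negPn/negP => Hc.
      have HjCD : j \in C0 :|: D0 by rewrite -Hu inE Hj orbT.
      move: HjCD; rewrite !inE => /orP[]/andP[Hjx' HjC]; last first.
        by move: Hc; rewrite (HiD _ _ HyD HjC) // eq_sym.
      have Hz : z \in C0 :|: D0 by rewrite -Hu inE HzC.
      have Hzj : z != j by apply/negP => /eqP E; subst z; move/disjP: Hd' => /(_ _ HzC); rewrite Hj.
      have H2y : #|vs y| = 2 by apply: H2; rewrite inE HyD orbT.
      move: (deg2 HiC H2y).
      have Hsub3 : [set x; z; j] \subset [set c in C | ~~ [disjoint vs c & vs y]].
        apply/subsetP => c; rewrite !inE => /orP[/orP[]|]/eqP->.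
        - by rewrite HxC Hxy.
        - move: Hz; rewrite !inE => /orP[]/andP[_ HzX].
          + by rewrite HzX disjoint_sym Hyz.
          + case: (HinC z HzC) => _ Hzy _.
            by move: Hyz; rewrite (HiD _ _ HyD HzX) // eq_sym.
        - by rewrite HjC disjoint_sym Hc.
      move/(leq_trans (subset_leq_card Hsub3)).
      have Hxz : x != z by case: (HinC z HzC) => /eqP Hzx _ _; apply/eqP => E; apply: Hzx.
      have Hxj : x != j by case: (HinD j Hj) => /eqP Hjx'' _ _; apply/eqP => E; apply: Hjx''.
      by rewrite -setUA cardsU1 cards2 !inE negb_or Hxz Hxj Hzj.
    * have HxC0' : x \notin C0' by apply/negP => H; case: (HinC x H) => /eqP.
      by rewrite cardsU1 HxC0' add1n HS' HSC.
  + exists (y |: C0'), (x |: D0'); split.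
    * exact: HU'.
    * apply/disjP => j; rewrite !inE => /orP[/eqP->|Hj]; apply/negP => /orP[/eqP E|Hj'].
      - by rewrite E eqxx in Hxny.
      - by case: (HinD y Hj') => _ /eqP.
      - by case: (HinC j Hj) => /eqP.
      - by move/disjP: Hd' => /(_ _ Hj); rewrite Hj'.
    * apply: indep_addd => // j Hj _; apply/negPn/negP => Hc; move/exists_inP: Hno; apply.
      by exists j.
    * apply: indep_addd => // j Hj _; by case: (HinD j Hj).
    * have HyC0' : y \notin C0' by apply/negP => H; case: (HinC y H) => _ /eqP.
      by rewrite cardsU1 HyC0' add1n HS' HSC.
- exists (C :\ x), (x |: D); split.
  + apply/setP => j; rewrite !inE; case: (j =P x) => [->|_] //=; by rewrite HxC.
  + apply/disjP => j; rewrite !inE => /andP[Hjx HjC]; rewrite negb_or Hjx /=.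
    by move/disjP: Hd => /(_ _ HjC).
  + exact: indep_sub (subsetDl _ _) HiC.
  + apply: indep_addd => // j Hj _; apply/negPn/negP => Hc.
    by move/setP: H0 => /(_ j); rewrite !inE Hj Hc.
  + by rewrite (cardsD1 x C) HxC.
Qed.

End Gen.

Section Col.
Variables (T I : finType) (vs : I -> {set T}) (k : nat) (X : {set I}).

Definition cls (col : I -> 'I_k) d := [set i in X | col i == d].
Definition pcol col := forall d, indep vs (cls col d).

Lemma sum_cls col : \sum_(d < k) #|cls col d| = #|X|.
Proof.
rewrite /cls; under eq_bigr => d _ do rewrite card_sep.
rewrite exchange_big /= -sum1_card; apply: eq_bigr => i _.
rewrite (bigD1 (col i)) //= eqxx big1 ?addn0 // => d Hd.
by rewrite eq_sym (negbTE Hd).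
Qed.

Lemma recolor col a c (A' C' : {set I}) : a != c -> pcol col ->
  A' :|: C' = cls col a :|: cls col c -> [disjoint A' & C'] ->
  indep vs A' -> indep vs C' ->
  exists col', [/\ pcol col', cls col' a = A', cls col' c = C' &
     forall d, d != a -> d != c -> cls col' d = cls col d].
Proof.
move=> Hac Hp Hu Hd HA HC.
pose col' i := if i \in A' then a else if i \in C' then c else col i.
have HAX : forall i, i \in A' :|: C' -> i \in X.
  by move=> i; rewrite Hu !inE => /orP[]/andP[].
have Hout : forall i, i \notin A' :|: C' -> i \in X -> (col i != a) && (col i != c).
  move=> i; rewrite Hu !inE negb_or => /andP[H1 H2] HX.
  by move: H1 H2; rewrite HX /= => -> ->.
have HcA : cls col' a = A'.
  apply/setP => i; rewrite !inE /col'.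
  case: (boolP (i \in A')) => HiA; first by rewrite eqxx andbT HAX // inE HiA.
  case: (boolP (i \in C')) => HiC; first by rewrite eq_sym (negbTE Hac) andbF.
  apply/negP => /andP[HX Hc]; move: (Hout i); rewrite inE (negbTE HiA) (negbTE HiC).
  by rewrite Hc => /(_ isT HX).
have HcC : cls col' c = C'.
  apply/setP => i; rewrite !inE /col'.
  case: (boolP (i \in A')) => HiA.
    by rewrite (negbTE Hac) andbF; apply/esym/negP => HiC; move/disjP: Hd => /(_ _ HiA); rewrite HiC.
  case: (boolP (i \in C')) => HiC; first by rewrite eqxx andbT HAX // inE HiC orbT.
  apply/negP => /andP[HX Hc]; move: (Hout i); rewrite inE (negbTE HiA) (negbTE HiC).
  by rewrite Hc andbF => /(_ isT HX).
have Hcd : forall d, d != a -> d != c -> cls col' d = cls col d.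
  move=> d Hda Hdc; apply/setP => i; rewrite !inE /col'.
  case: (boolP (i \in A')) => HiA.
    rewrite eq_sym (negbTE Hda) andbF; apply/esym/negP => /andP[HX /eqP E].
    have : i \in A' :|: C' by rewrite inE HiA.
    by rewrite Hu !inE HX E (negbTE Hda) (negbTE Hdc).
  case: (boolP (i \in C')) => HiC //.
    rewrite eq_sym (negbTE Hdc) andbF; apply/esym/negP => /andP[HX /eqP E].
    have : i \in A' :|: C' by rewrite inE HiC orbT.
    by rewrite Hu !inE HX E (negbTE Hda) (negbTE Hdc).
exists col'; split => // d.
case: (d =P a) => [->|/eqP Hda]; first by rewrite HcA.
case: (d =P c) => [->|/eqP Hdc]; first by rewrite HcC.
by rewrite Hcd //; apply: Hp.
Qed.

Lemma all_eq_m (f : 'I_k -> nat) m : (forall d, f d <= m) -> \sum_(d < k) f d = k * m ->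
  forall d, f d = m.
Proof.
move=> Hle Hs d; apply/eqP; rewrite eqn_leq Hle /=; rewrite leqNgt; apply/negP => Hlt.
have : \sum_(d0 < k) f d0 < k * m.
  rewrite (bigD1 d) //=.
  apply: (@leq_trans (m + \sum_(i < k | i != d) m)).
    rewrite -addSn; apply: leq_add => //; exact: leq_sum.
  by rewrite -(bigD1 d (P := predT) (F := fun _ => m)) //= sum_nat_const card_ord.
by rewrite Hs ltnn.
Qed.

Lemma equalize m col : pcol col -> (forall i, i \in X -> #|vs i| = 2) ->
  #|X| = k * m -> exists col', pcol col' /\ forall d, #|cls col' d| = m.
Proof.
move=> Hp H2 HX.
pose mu (col : I -> 'I_k) := \sum_(d < k) (#|cls col d| - m).
suff : forall N col, mu col <= N -> pcol col -> exists col', pcol col' /\ forall d, #|cls col' d| = m.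
  by move/(_ (mu col) col (leqnn _) Hp).
elim=> [|N IHN] {Hp}col Hmu Hp.
all: case: (boolP [forall d, #|cls col d| <= m]) => [/forallP Hall|].
1,3: by exists col; split => //; apply: all_eq_m => //; rewrite sum_cls.
- move=> /forallPn[a]; rewrite -ltnNge => Ha.
  move: Hmu; rewrite leqn0 => /eqP; rewrite /mu (bigD1 a) //=.
  by move/eqP; rewrite addn_eq0 subn_eq0 leqNgt Ha.
move=> /forallPn[a]; rewrite -ltnNge => Ha.
have [c Hc] : exists c, #|cls col c| < m.
  apply/existsP; apply/negP => /existsP Hn.
  have Hge : forall d, m <= #|cls col d| by move=> d; rewrite leqNgt; apply/negP => H; apply: Hn; exists d.
  have : k * m < \sum_(d < k) #|cls col d|.
    rewrite (bigD1 a) //=.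
    apply: (@leq_trans (m.+1 + \sum_(i < k | i != a) m)).
      by rewrite addSn ltnS -(bigD1 a (P := predT) (F := fun _ => m)) //= sum_nat_const card_ord.
    apply: leq_add => //; exact: leq_sum.
  by rewrite sum_cls HX ltnn.
have Hac : a != c by apply/negP => /eqP E; subst c; move: (ltn_trans Hc Ha); rewrite ltnn.
have Hdj : [disjoint cls col a & cls col c].
  apply/disjP => i; rewrite !inE => /andP[_ /eqP ->]; by rewrite (negbTE Hac) andbF.
have H2' : forall i, i \in cls col a :|: cls col c -> #|vs i| = 2.
  by move=> i; rewrite !inE => /orP[]/andP[Hi _]; apply: H2.
have [C' [D' [Hu Hd' HiC HiD HS]]] := balance_gen (ltnSn _) H2' Hdj (Hp a) (Hp c) (ltn_trans Hc Ha).
have [col' [Hp' HcA HcC Hcd]] := recolor Hac Hp Hu Hd' HiC HiD.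
apply: (IHN col') => //.
have HD' : #|D'| = #|cls col c|.+1.
  have := cardsU C' D'; have := cardsU (cls col a) (cls col c).
  rewrite -Hu; move/disjoint_setI0: Hd' => ->; move/disjoint_setI0: Hdj => ->.
  rewrite !cards0 !subn0 => -> ; rewrite -HS; lia.
have Hlt : mu col' < mu col.
  rewrite /mu (bigD1 a) //= [X in _ < X](bigD1 a) //= HcA -HS.
  rewrite subSn; last by rewrite -ltnS HS.
  rewrite addSn ltnS; apply: leq_add => //.
  apply: leq_sum => d Hda; case: (d =P c) => [->|/eqP Hdc].
    by rewrite HcC HD' (_ : _ - m = 0) //; apply/eqP; rewrite subn_eq0.
  by rewrite Hcd.
by rewrite -ltnS; apply: leq_trans Hlt Hmu.
Qed.

End Col.


Definition sdr (M1 M2 M3 : {set 'I_4}) := exists c1 c2 c3,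
  [/\ c1 \in M1, c2 \in M2, c3 \in M3 & [&& c1 != c2, c1 != c3 & c2 != c3]].

Lemma ex_in (U : finType) (A : {set U}) : 0 < #|A| -> exists x, x \in A.
Proof. by move/card_gt0P. Qed.

Lemma sdr_perm12 M1 M2 M3 : sdr M1 M2 M3 -> sdr M2 M1 M3.
Proof.
case=> c1 [c2 [c3 [H1 H2 H3 /and3P[a b c]]]]; exists c2, c1, c3; split=> //.
by apply/and3P; split => //; rewrite eq_sym.
Qed.
Lemma sdr_perm23 M1 M2 M3 : sdr M1 M2 M3 -> sdr M1 M3 M2.
Proof.
case=> c1 [c2 [c3 [H1 H2 H3 /and3P[a b c]]]]; exists c1, c3, c2; split=> //.
by apply/and3P; split => //; rewrite eq_sym.
Qed.

Lemma sdr_big (M1 M2 M3 : {set 'I_4}) : 2 <= #|M1| -> 2 <= #|M2| -> 3 <= #|M3| -> sdr M1 M2 M3.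
Proof.
move=> H1 H2 H3.
have [c1 Hc1] := ex_in (leq_trans (isT : 0 < 2) H1).
have : 0 < #|M2 :\ c1| by move: H2; rewrite (cardsD1 c1 M2); case: (c1 \in M2) => /=; lia.
case/ex_in => c2; rewrite !inE => /andP[Hc21 Hc2].
have : 0 < #|M3 :\: [set c1; c2]|.
  rewrite cardsD; have : #|M3 :&: [set c1; c2]| <= 2.
    by apply: leq_trans (subset_leq_card (subsetIr _ _)) _; rewrite cards2; case: (c1 != c2).
  lia.
case/ex_in => c3; rewrite !inE negb_or => /andP[/andP[Hc31 Hc32] Hc3].
by exists c1, c2, c3; split => //; rewrite eq_sym Hc21 eq_sym Hc31 eq_sym Hc32.
Qed.

Lemma diff2 (M1 M2 : {set 'I_4}) : #|M1| = 2 -> #|M2| = 2 -> M1 != M2 -> exists d, d \in M1 :\: M2.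
Proof.
move=> H1 H2 Hne; apply: ex_in.
have HI : #|M1 :&: M2| < 2.
  have : #|M1 :&: M2| <= 2 by rewrite (leq_trans (subset_leq_card (subsetIl M1 M2))) ?H1.
  rewrite leq_eqVlt => /orP[/eqP E|] //.
  exfalso; move/negP: Hne; apply.
  have E1 : M1 :&: M2 = M1 by apply/eqP; rewrite eqEcard subsetIl E H1.
  have E2 : M1 :&: M2 = M2 by apply/eqP; rewrite eqEcard subsetIr E H2.
  by rewrite -E1 {1}E2.
rewrite cardsD; lia.
Qed.

Lemma sdr_two (M1 M2 M3 : {set 'I_4}) : #|M1| = 2 -> #|M2| = 2 -> #|M3| = 2 -> M1 != M2 -> sdr M1 M2 M3.
Proof.
move=> H1 H2 H3 Hne.
have [d] := diff2 H1 H2 Hne; rewrite inE => /andP[Hd2 Hd1].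
have Hne' : M2 != M1 by rewrite eq_sym.
have [f] := diff2 H2 H1 Hne'; rewrite inE => /andP[Hf1 Hf2].
have Hdf : d != f by apply/negP => /eqP E; subst f; rewrite Hd1 in Hf1.
case: (boolP [exists c, (c \in M3) && (c \notin [set d; f])]) => [/existsP[c /andP[Hc Hcn]]|Hno].
  exists d, f, c; split => //; move: Hcn; rewrite !inE negb_or => /andP[a b].
  by rewrite Hdf eq_sym a eq_sym b.
have HM3 : M3 \subset [set d; f].
  apply/subsetP => c Hc; apply/negPn/negP => Hcn; move/existsP: Hno; apply; exists c.
  by rewrite Hc Hcn.
have Hd3 : d \in M3.
  have : M3 == [set d; f] by rewrite eqEcard HM3 cards2 Hdf H3.
  by move/eqP->; rewrite !inE eqxx.
have : 0 < #|M1 :\ d| by move: H1; rewrite (cardsD1 d M1) Hd1 /=; lia.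
case/ex_in => d'; rewrite !inE => /andP[Hd'd Hd'].
have Hd'f : d' != f by apply/negP => /eqP E; subst d'; rewrite Hd' in Hf1.
by exists d', f, d; split => //; rewrite Hd'f Hd'd eq_sym Hdf.
Qed.

Lemma sdr3 (M1 M2 M3 : {set 'I_4}) : 2 <= #|M1| -> 2 <= #|M2| -> 2 <= #|M3| ->
  ~~ [&& M1 == M2, M2 == M3 & #|M1| == 2] -> sdr M1 M2 M3.
Proof.
move=> H1 H2 H3 Hn.
case: (leqP 3 #|M3|) => [G3|]; first exact: sdr_big.
case: (leqP 3 #|M2|) => [G2|]; first by move=> _; apply: sdr_perm23; apply: sdr_big.
case: (leqP 3 #|M1|) => [G1|]; first by move=> _ _; apply: sdr_perm12; apply: sdr_perm23;
  apply: sdr_perm12; apply: sdr_big.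
move=> L1 L2 L3.
have E1 : #|M1| = 2 by lia. have E2 : #|M2| = 2 by lia. have E3 : #|M3| = 2 by lia.
case: (boolP (M1 == M2)) => [/eqP E12|N12]; last exact: sdr_two.
case: (boolP (M2 == M3)) => [/eqP E23|N23]; first by move: Hn; rewrite E12 E23 !eqxx E3.
apply: sdr_perm12; apply: sdr_perm23.
exact: sdr_two.
Qed.


Lemma inset3 (U : finType) (u x y z : U) : u \in [set x; y; z] -> [\/ u = x, u = y | u = z].
Proof. by rewrite !inE => /orP[/orP[]|]/eqP->; [apply: Or31|apply: Or32|apply: Or33]. Qed.

Section Graph.
Variables (T : finType) (e : rel T).
Hypotheses (Hs : simple_graph e) (Hc : cubic e).

Lemma e_neq x y : e x y -> x != y.
Proof. by case: Hs => Hirr _ Hxy; apply/negP => /eqP E; subst y; rewrite Hirr in Hxy. Qed.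

Lemma e_sym x y : e x y -> e y x.
Proof. by case: Hs => _ Hsym; rewrite Hsym. Qed.

Lemma edgesP A : reflect (exists x y, e x y /\ A = [set x; y]) (A \in edges e).
Proof.
rewrite /edges inE; apply: (iffP existsP) => [[x /existsP[y /andP[H /eqP->]]]|[x [y [H ->]]]].
  by exists x, y.
by exists x; apply/existsP; exists y; rewrite H eqxx.
Qed.

Lemma edge_of v w : e v w -> [set v; w] \in edges e.
Proof. by move=> H; apply/edgesP; exists v, w. Qed.

Lemma edge2 A : A \in edges e -> #|A| = 2.
Proof. by case/edgesP=> x [y [H ->]]; rewrite cards2 e_neq. Qed.

Lemma edge_at v A : A \in edges e -> v \in A -> exists w, e v w /\ A = [set v; w].
Proof.
case/edgesP=> x [y [H ->]]; rewrite !inE => /orP[]/eqP->.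
  by exists y.
by exists x; split; [apply: e_sym | rewrite setUC].
Qed.

Lemma set2_inj v u1 u2 : e v u1 -> [set v; u1] = [set v; u2] -> u1 = u2.
Proof.
move=> H E; have : u1 \in [set v; u2] by rewrite -E !inE eqxx orbT.
rewrite !inE => /orP[/eqP E1|/eqP //].
by move: (e_neq H); rewrite E1 eqxx.
Qed.

Lemma edges_at v : [set A in edges e | v \in A] = [set [set v; w] | w in [set y | e v y]].
Proof.
apply/setP => A; rewrite inE; apply/andP/imsetP => [[HA Hv]|[w]].
  by have [w [H ->]] := edge_at HA Hv; exists w; rewrite ?inE.
by rewrite inE => H ->; split; [apply: edge_of | rewrite !inE eqxx].
Qed.

Lemma card_edges_at v : #|[set A in edges e | v \in A]| = 3.
Proof.
rewrite edges_at card_in_imset ?Hc // => u1 u2; rewrite !inE => H1 _.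
exact: set2_inj.
Qed.

Lemma handshake : 2 * #|edges e| = 3 * #|T|.
Proof.
have E1 : \sum_(A in edges e) \sum_v (v \in A : nat) = 2 * #|edges e|.
  rewrite -sum1_card big_distrr /=; apply: eq_bigr => A HA.
  by rewrite muln1 -(edge2 HA) -sum1_card [RHS]big_mkcond; apply: eq_bigr => v _; case: (v \in A).
have E2 : \sum_v \sum_(A in edges e) (v \in A : nat) = 3 * #|T|.
  rewrite -sum1_card big_distrr /=; apply: eq_bigr => v _.
  by rewrite muln1 -(card_edges_at v) card_sep.
by rewrite -E1 -E2 exchange_big.
Qed.

Lemma nbrs v : exists x y z, [&& x != y, x != z & y != z] /\ [set w | e v w] = [set x; y; z].
Proof.
have H3 := Hc v.
have H0 : 0 < #|[set w | e v w]| by rewrite H3.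
have [x Hx] := ex_in H0.
have : #|[set w | e v w] :\ x| == 2 by move: H3; rewrite (cardsD1 x) Hx add1n => -[->].
case/cards2P => y [z [Hyz E]].
have Hy : y \in [set w | e v w] :\ x by rewrite E !inE eqxx.
have Hz : z \in [set w | e v w] :\ x by rewrite E !inE eqxx orbT.
move: Hy Hz; rewrite !inE => /andP[Hyx _] /andP[Hzx _].
exists x, y, z; split; first by rewrite eq_sym Hyx eq_sym Hzx.
by rewrite -(setD1K Hx) E setUA.
Qed.


Definition vid (A : {set T}) := A.

Lemma vizing n : forall E : {set {set T}}, #|E| < n -> E \subset edges e ->
  exists col : {set T} -> 'I_4, pcol vid E col.
Proof.
elim: n => [|n IH] E // HE HsubE.
case: (set_0Vmem E) => [-> | [A0 HA0]].
  by exists (fun _ => ord0) => d i j; rewrite !inE.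
have HA0e : A0 \in edges e by apply: (subsetP HsubE).
have [v Hv] : exists v, v \in A0 by apply: ex_in; rewrite edge2.
have [x [y [z [Hdist HN]]]] := nbrs v.
have Hxyz : forall u, u \in [set x; y; z] -> e v u.
  by move=> u; rewrite -HN inE.
have Hex : e v x by apply: Hxyz; rewrite !inE eqxx.
have Hey : e v y by apply: Hxyz; rewrite !inE eqxx orbT.
have Hez : e v z by apply: Hxyz; rewrite !inE eqxx !orbT.
move: Hdist => /and3P[Hxy Hxz Hyz].
set E0 := [set A in E | v \notin A].
have HE0sub : E0 \subset E by apply/subsetP => A; rewrite inE => /andP[].
have HE0 : #|E0| < n.
  have : E0 \proper E by apply/properP; split => //; exists A0 => //; rewrite inE Hv andbF.
  by move/proper_card => H; apply: leq_trans H _.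
have HE0e : E0 \subset edges e by apply: subset_trans HE0sub HsubE.
have [col0 Hp0] := IH E0 HE0 HE0e.
pose used (col : {set T} -> 'I_4) u := [set d | cov vid (cls E0 col d) u].
pose avail col u := ~: used col u.
have avail2 : forall col u, e v u -> 2 <= #|avail col u|.
  move=> col u Hu.
  have Hsub1 : used col u \subset col @: [set A in E0 | u \in A].
    apply/subsetP => d; rewrite inE => /covP[A]; rewrite inE => /andP[HA /eqP <-] HuA.
    by apply/imsetP; exists A; rewrite // inE HA.
  have Hsub2 : [set A in E0 | u \in A] \subset [set A in edges e | u \in A] :\ [set u; v].
    apply/subsetP => A; rewrite 2!inE => /andP[/andP[HAE HvA] HuA].
    rewrite in_setD1; apply/andP; split.
      apply/negP => /eqP EA; move/negP: HvA; apply; rewrite EA !inE eqxx orbT //.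
    by rewrite in_set (subsetP HsubE _ HAE) HuA.
  have Huv : [set u; v] \in [set A in edges e | u \in A].
    rewrite inE; apply/andP; split; last by rewrite !inE eqxx.
    by apply: edge_of; apply: e_sym.
  have Hc2 : #|[set A in edges e | u \in A] :\ [set u; v]| = 2.
    by move: (card_edges_at u); rewrite (cardsD1 [set u; v]) Huv add1n => -[].
  have : #|used col u| <= 2.
    apply: leq_trans (subset_leq_card Hsub1) _; apply: leq_trans (leq_imset_card _ _) _.
    by rewrite -Hc2; apply: subset_leq_card.
  move=> Hle; rewrite /avail -(leq_add2l #|used col u|) cardsC card_ord.
  by move: Hle; rewrite -(leq_add2r 2).
pose M col u := if [set v; u] \in E then avail col u else setT.
have M2 : forall col u, e v u -> 2 <= #|M col u|.
  by move=> col u Hu; rewrite /M; case: ifP => _; [apply: avail2 | rewrite cardsT card_ord].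
have HvE : forall A, A \in E -> v \in A -> exists2 u, u \in [set x; y; z] & A = [set v; u].
  move=> A HA HvA; have [u [Hu ->]] := edge_at (subsetP HsubE _ HA) HvA.
  by exists u => //; rewrite -HN inE.
have ext : forall col : {set T} -> 'I_4, pcol vid E0 col -> sdr (M col x) (M col y) (M col z) ->
    exists col' : {set T} -> 'I_4, pcol vid E col'.
  move=> col Hp; rewrite /sdr => -[cx [cy [cz [Hcx Hcy Hcz /and3P[Dxy Dxz Dyz]]]]].
  pose cu u := if u == x then cx else if u == y then cy else cz.
  pose col' (A : {set T}) := if v \in A then
     (if A == [set v; x] then cx else if A == [set v; y] then cy else cz) else col A.
  have eqs2 : forall u w, e v u -> ([set v; u] == [set v; w]) = (u == w).
    by move=> u w Hu; apply/eqP/eqP => [/(set2_inj Hu)|->].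
  have Hyx : (y == x) = false by rewrite eq_sym (negbTE Hxy).
  have Hzx : (z == x) = false by rewrite eq_sym (negbTE Hxz).
  have Hzy : (z == y) = false by rewrite eq_sym (negbTE Hyz).
  have Hcol' : forall u, u \in [set x; y; z] -> col' [set v; u] = cu u.
    move=> u Hu; rewrite /col' set21 !eqs2 ?Hxyz //.
  have Hcu : forall u, u \in [set x; y; z] -> [set v; u] \in E -> cu u \in avail col u.
    move=> u /inset3[]-> HE'.
    - by move: Hcx; rewrite /cu eqxx /M HE'.
    - by move: Hcy; rewrite /cu Hyx eqxx /M HE'.
    - by move: Hcz; rewrite /cu Hzx Hzy /M HE'.
  have cu_inj : {in [set x; y; z] &, injective cu}.
    move=> u1 u2 /inset3[]-> /inset3[]->;
    rewrite /cu ?eqxx ?Hyx ?Hzx ?Hzy //= => /eqP;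
    rewrite ?(eq_sym cy cx) ?(eq_sym cz cx) ?(eq_sym cz cy) ?(negbTE Dxy) ?(negbTE Dxz) ?(negbTE Dyz) //.
  have key : forall A, A \in E -> v \in A -> exists u,
      [/\ u \in [set x; y; z], A = [set v; u], col' A = cu u & cu u \in avail col u].
    move=> A HA HvA; have [u Hu EA] := HvE A HA HvA.
    exists u; split => //; first by rewrite EA Hcol'.
    by apply: Hcu; rewrite // -EA.
  have half : forall i j, i \in E -> j \in E -> v \in i -> v \notin j -> col' i = col' j ->
      [disjoint vid i & vid j].
    move=> i j Hi Hj Hvi Hvj Cij; have [u [Hu Ei Ci Hav]] := key i Hi Hvi.
    rewrite /vid Ei; apply/disjP => w; rewrite !inE => /orP[]/eqP->//.
    apply/negP => Huj; move: Hav; rewrite /avail in_setC => /negP; apply; rewrite /used inE.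
    apply/covP; exists j => //; rewrite !inE Hj Hvj /=.
    by rewrite -Ci Cij /col' (negbTE Hvj).
  exists col' => d i j; rewrite !inE => /andP[Hi /eqP Ci] /andP[Hj /eqP Cj] Hij.
  case: (boolP (v \in i)) => Hvi; case: (boolP (v \in j)) => Hvj.
  - have [u1 [Hu1 Ei C1 _]] := key i Hi Hvi; have [u2 [Hu2 Ej C2 _]] := key j Hj Hvj.
    exfalso; move/negP: Hij; apply; rewrite Ei Ej; apply/eqP; congr [set v; _].
    by apply: cu_inj => //; rewrite -C1 -C2 Ci Cj.
  - by apply: half => //; rewrite Ci Cj.
  - by rewrite disjoint_sym; apply: half => //; rewrite Ci Cj.
  - have HiE0 : i \in E0 by rewrite inE Hi Hvi.
    have HjE0 : j \in E0 by rewrite inE Hj Hvj.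
    apply: (Hp d) => //.
    + by rewrite /cls in_set HiE0 /= -Ci /col' (negbTE Hvi).
    + by rewrite /cls in_set HjE0 /= -Cj /col' (negbTE Hvj).
case: (boolP [&& M col0 x == M col0 y, M col0 y == M col0 z & #|M col0 x| == 2]) => Hfail;
  last by apply: (ext col0 Hp0); apply: sdr3 => //; apply: M2.
case/and3P: Hfail => /eqP Exy /eqP Eyz /eqP Hc2.
have inE_u : forall u, u \in [set x; y; z] -> [set v; u] \in E.
  move=> u Hu; apply/negPn/negP => Hn.
  have : #|M col0 u| = 2 by case/inset3: Hu => ->; [exact: Hc2 | rewrite -Exy | rewrite -Eyz -Exy].
  by rewrite /M (negbTE Hn) cardsT card_ord.
have Hx3 : x \in [set x; y; z] by rewrite !inE eqxx.
have Hy3 : y \in [set x; y; z] by rewrite !inE eqxx orbT.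
have Hz3 : z \in [set x; y; z] by rewrite !inE eqxx !orbT.
have HMu : forall col u, u \in [set x; y; z] -> M col u = avail col u.
  by move=> col u Hu; rewrite /M inE_u.
have Ay : avail col0 y = avail col0 x by rewrite -!HMu // Exy.
have Az : avail col0 z = avail col0 x by rewrite -!HMu // Exy Eyz.
have Ax2 : #|avail col0 x| = 2 by rewrite -HMu.
have [c Hcn] : exists c, c \in ~: avail col0 x.
  apply: ex_in; have := cardsC (avail col0 x); rewrite Ax2 card_ord.
  by case: #|~: avail col0 x| => [|n1] // /eqP.
have [a Ha] : exists a, a \in avail col0 x by apply: ex_in; rewrite Ax2.
have Hac : a != c by apply/negP => /eqP E'; move: Hcn; rewrite -E' in_setC Ha.
set A := cls E0 col0 a; set C := cls E0 col0 c.
have H2 : forall i, i \in A :|: C -> #|vid i| = 2.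
  move=> i; rewrite in_setU /A /C /cls !in_set => /orP[]/andP[/andP[HiE _] _]; rewrite /vid; apply: edge2; exact: (subsetP HsubE _ HiE).
have Hd : [disjoint A & C].
  by apply/disjP => i; rewrite !inE => /andP[_ /eqP->]; rewrite (negbTE Hac) andbF.
have HcC : cov vid C x by move: Hcn; rewrite /avail !in_setC negbK /used inE.
have HcA : ~~ cov vid A x by move: Ha; rewrite /avail in_setC /used inE.
have [A' [C' [Hu Hd' [HiA HiC] /andP[HcA' HcC'] [w0 Hw0]]]] :=
  swap_gen (ltnSn #|A|) H2 Hd (Hp0 a) (Hp0 c) HcC HcA.
have [col1 [Hp1 H1a H1c H1d]] := recolor Hac Hp0 Hu Hd' HiA HiC.
apply: (ext col1 Hp1); rewrite !HMu //.
have same : forall u, u != x -> u != w0 -> avail col1 u = avail col0 u.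
  move=> u Hux Huw; have [Ea Ec] := Hw0 u Hux Huw.
  apply/setP => d; rewrite /avail !in_setC /used !inE.
  case: (d =P a) => [->|/eqP Hda]; first by rewrite H1a Ea.
  case: (d =P c) => [->|/eqP Hdc]; first by rewrite H1c Ec.
  by rewrite H1d.
have Hc1 : c \in avail col1 x by rewrite /avail in_setC /used inE H1c.
have Hyx : y != x by rewrite eq_sym.
have Hzx : z != x by rewrite eq_sym.
apply: sdr3; try by apply: avail2.
apply/negP => /and3P[/eqP E1 /eqP E2 _].
case: (y =P w0) => [Ey|/eqP Hyw].
  have Hzw : z != w0 by rewrite -Ey eq_sym.
  by move: Hcn; rewrite -Az -(same z) // -E2 -E1 in_setC Hc1.
by move: Hcn; rewrite -Ay -(same y) // -E1 in_setC Hc1.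
Qed.

End Graph.


Lemma card_bigcup_le (U : finType) j (F : 'I_j -> {set U}) :
  #|\bigcup_(i < j) F i| <= \sum_(i < j) #|F i|.
Proof.
elim/big_rec2: _ => [|i s U' _ H]; first by rewrite cards0.
rewrite cardsU; apply: leq_trans (leq_subr _ _) _; exact: leq_add.
Qed.

Lemma sub_card (U : finType) (S : {set U}) r : r <= #|S| -> exists R : {set U}, R \subset S /\ #|R| = r.
Proof.
elim: r => [|r IH] H; first by exists set0; rewrite sub0set cards0.
have [R [HR HRc]] := IH (ltnW H).
have : 0 < #|S :\: R| by rewrite cardsD (setIidPr HR) HRc subn_gt0.
case/ex_in => x; rewrite inE => /andP[HxR HxS].
exists (x |: R); split; first by rewrite subUset sub1set HxS.
by rewrite cardsU1 HxR HRc.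
Qed.

Lemma lower (T : finType) (e : rel T) n m j : #|edges e| = 3 * n -> 0 < m ->
  m_cover e m j -> ceil_div (3 * n) m <= j.
Proof.
move=> HE Hm [F [HF HU]].
have : 3 * n <= j * m.
  rewrite -HE -HU; apply: leq_trans (card_bigcup_le F) _.
  rewrite (eq_bigr (fun _ => m)); first by rewrite sum_nat_const card_ord.
  by move=> i _; case: (HF i).
rewrite /ceil_div -(ltnS _ j) ltn_divLR // mulSn => H.
lia.
Qed.

Theorem proposition1 (T : finType) (e : rel T) (n m : nat) :
  simple_graph e -> cubic e -> connected_graph e ->
  #|T| = 2 * n ->
  0 < m ->
  m < ceil_div (3 * n) 4 ->
  excessive_index_eq e m (ceil_div (3 * n) m).
Proof.
move=> Hs Hc _ HT Hm Hmk.
have HE : #|edges e| = 3 * n by have := handshake Hs Hc; rewrite HT; lia.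
split; last by move=> j; apply: lower.
have H4m : 4 * m < 3 * n by move: Hmk; rewrite /ceil_div leq_divRL //; lia.
set k := ceil_div (3 * n) m.
have Hkdef : k = (3 * n + m.-1) %/ m by [].
have Hdiv := divn_eq (3 * n + m.-1) m.
have Hmod := ltn_pmod (3 * n + m.-1) Hm.
rewrite -Hkdef in Hdiv.
have H3kn : 3 * n <= k * m by lia.
have Hr : k * m < 3 * n + m by lia.
have H45 : 4 < k.
  have H : 4 * m < k * m by lia.
  by rewrite -(ltn_pmul2r Hm).
have [col4 Hp4] := vizing Hs Hc (ltnSn #|edges e|) (subxx _).
have [c0 Hc0] : exists c0 : 'I_4, m < #|cls (edges e) col4 c0|.
  apply/existsP; apply/negP => /existsP Hn.
  have : \sum_(c < 4) #|cls (edges e) col4 c| <= \sum_(c < 4) m.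
    by apply: leq_sum => c _; rewrite leqNgt; apply/negP => H; apply: Hn; exists c.
  rewrite sum_cls HE sum_nat_const card_ord; lia.
have Hr' : k * m - 3 * n <= #|cls (edges e) col4 c0| by lia.
have [R [HR HRc]] := sub_card Hr'.
have HRE : R \subset edges e.
  by apply: subset_trans HR _; apply/subsetP => A; rewrite inE => /andP[].
pose X : {set {set T} * bool} := setX (edges e) [set false] :|: setX R [set true].
have memX : forall p, p \in X = ((p.1 \in edges e) && ~~ p.2) || ((p.1 \in R) && p.2).
  by case=> A b; rewrite !inE; case: b; rewrite ?andbT ?andbF ?orbF.
have HXc : #|X| = k * m.
  rewrite cardsU !cardsX !cards1 !muln1 HE HRc.
  have -> : setX (edges e) [set false] :&: setX R [set true] = set0.
    by apply/setP => -[A b]; rewrite !inE; case: b; rewrite ?andbF ?andbT.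
  rewrite cards0 subn0; lia.
pose col (p : {set T} * bool) : 'I_k := if p.2 then Ordinal H45 else widen_ord (ltnW H45) (col4 p.1).
pose vs (p : {set T} * bool) := p.1.
have H2 : forall p, p \in X -> #|vs p| = 2.
  move=> p; rewrite memX => /orP[]/andP[Hp _]; apply: (edge2 Hs) => //.
  exact: (subsetP HRE).
have Hp : pcol vs X col.
  move=> d [A b] [B b']; rewrite /cls in_set; rewrite [in X in _ -> X -> _]in_set /vs /= => /andP[HpX /eqP Cp] /andP[HqX /eqP Cq] Hpq.
  move: HpX HqX Cp Cq Hpq; rewrite !memX /= /col /=.
  case: b; case: b'; rewrite ?andbT ?andbF ?orbF /= => HA HB Cp Cq Hpq.
  - have HAB : A != B by apply/negP => /eqP E; subst B; rewrite eqxx in Hpq.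
    have := subsetP HR _ HA; have := subsetP HR _ HB; rewrite !inE => /andP[_ /eqP EB] /andP[_ /eqP EA].
    apply: (Hp4 c0) => //; rewrite inE ?(subsetP HRE) ?EA ?EB ?eqxx //.
  - by exfalso; move: Cp; rewrite -Cq => /(congr1 val) /=; move: (ltn_ord (col4 B)) => H; lia.
  - by exfalso; move: Cp; rewrite -Cq => /(congr1 val) /=; move: (ltn_ord (col4 A)) => H; lia.
  - have HAB : A != B by apply/negP => /eqP E; subst B; rewrite eqxx in Hpq.
    have EAB : col4 A = col4 B by apply: val_inj; move: Cp; rewrite -Cq => /(congr1 val).
    apply: (Hp4 (col4 A)) => //; rewrite inE ?HA ?HB ?EAB ?eqxx //.
have [col' [Hp' Hcard]] := equalize Hp H2 HXc.
exists (fun d => [set vs p | p in cls X col' d]); split.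
- move=> d; split; last first.
    rewrite card_in_imset ?Hcard // => p q Hpd Hqd E; apply/eqP; apply/negPn/negP => Hne.
    have := Hp' d p q Hpd Hqd Hne; rewrite E => /disjoint_setI0; rewrite setIid => E0.
    have : q \in X by move: Hqd; rewrite inE => /andP[].
    by move/H2; rewrite E0 cards0.
  split.
    apply/subsetP => A /imsetP[p Hpd ->]; move: Hpd; rewrite inE => /andP[HpX _].
    by move: HpX; rewrite memX => /orP[]/andP[H _] //; apply: (subsetP HRE).
  move=> A B /imsetP[p Hpd ->] /imsetP[q Hqd ->] Hne.
  apply: (Hp' d) => //; apply/negP => /eqP E; subst q; by rewrite eqxx in Hne.
- apply/setP => A; apply/bigcupP/idP => [[d _ /imsetP[p Hpd ->]]|HA].
    move: Hpd; rewrite inE => /andP[HpX _].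
    by move: HpX; rewrite memX => /orP[]/andP[H _] //; apply: (subsetP HRE).
  exists (col' (A, false)) => //; apply/imsetP; exists (A, false) => //.
  by rewrite inE memX /= HA eqxx.
Qed.
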